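(* Let $f_1,\dots,f_n$ be monotone non-identical linear functions. If a counterclockwise permutation $\sigma$ for them satisfies $f^\sigma\le f^{\sigma_1}$, $f^\sigma\le f^{\sigma_{n-1}}$ and $\theta(f_{\sigma(1)})\ne\theta(f^\sigma)$, then $\sigma$ is minimum.
   Context: A linear function is $f(x)=ax+b$; monotone means $a>0$; identical means $f(x)=x$. $\vec f=(b,1-a)^\top$ and $\theta(f)\in[0,2\pi)$ is its polar angle ($\bot$ if $\vec f=0$). For a permutation $\sigma$ of $[n]$, $f^\sigma=f_{\sigma(n)}\circ\cdots\circ f_{\sigma(1)}$; $\sigma$ is minimum if $f^\sigma\le f^\rho$ pointwise for all permutations $\rho$. $\sigma$ is counterclockwise if there is $k$ with $\theta(f_{\sigma(k)})\le\cdots\le\theta(f_{\sigma(n)})\le\theta(f_{\sigma(1)})\le\cdots\le\theta(f_{\sigma(k-1)})$. The $k$-shift is $\sigma_k(i)=\sigma(i+k)$ for $i\le n-k$, $\sigma_k(i)=\sigma(i+k-n)$ otherwise. *)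

(* Defs.v *)
From HB Require Import structures.
From mathcomp Require Import all_boot all_order all_algebra all_fingroup.
From mathcomp Require Import all_classical all_reals all_analysis.
Set Implicit Arguments. Unset Strict Implicit. Unset Printing Implicit Defensive.
Import Order.TTheory GRing.Theory Num.Theory.
Local Open Scope ring_scope.

Section LinFun.
Variable R : realType.
Definition linf := (R * R)%type.
Definition lf_a (f : linf) : R := f.1.
Definition lf_b (f : linf) : R := f.2.
Definition lf_eval (f : linf) (x : R) : R := lf_a f * x + lf_b f.

Definition monotone_lf (f : linf) : Prop := 0 < lf_a f.
Definition identical_lf (f : linf) : Prop := lf_a f = 1 /\ lf_b f = 0.

Definition lf_comp (g f : linf) : linf :=
  (lf_a g * lf_a f, lf_a g * lf_b f + lf_b g).
Definition lf_id : linf := (1, 0).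

(* composition along a sequence s = [:: g1; ...; gm] : gm \o ... \o g1 *)
Definition lf_comp_seq (s : seq linf) : linf :=
  foldl (fun acc g => lf_comp g acc) lf_id s.

Definition lf_vec (f : linf) : R * R := (lf_b f, 1 - lf_a f).

(* polar angle in [0, 2 pi) of a nonzero vector (value 0 at the zero vector) *)
Definition angle (v : R * R) : R :=
  let r := Num.sqrt (v.1 ^+ 2 + v.2 ^+ 2) in
  if 0 <= v.2 then acos (v.1 / r) else 2 * pi - acos (v.1 / r).

(* theta(f) : None stands for bottom (vec f = 0) *)
Definition theta (f : linf) : option R :=
  if lf_vec f == (0, 0) then None else Some (angle (lf_vec f)).

(* f^sigma = f_{sigma(n)} \o ... \o f_{sigma(1)} *)
Definition fperm n (F : 'I_n -> linf) (s : 'S_n) : linf :=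
  lf_comp_seq [seq F (s i) | i <- enum 'I_n].

(* f^{sigma_k}: the k-shift sigma_k lists sigma(k+1),...,sigma(n),sigma(1),...,sigma(k) *)
Definition fshift n (F : 'I_n -> linf) (s : 'S_n) (k : nat) : linf :=
  lf_comp_seq (rot k [seq F (s i) | i <- enum 'I_n]).

Definition lf_le (f g : linf) : Prop := forall x : R, lf_eval f x <= lf_eval g x.

Definition is_minimum n (F : 'I_n -> linf) (s : 'S_n) : Prop :=
  forall r : 'S_n, lf_le (fperm F s) (fperm F r).

(* counterclockwise: for some k (1-indexed start sigma(k), i.e. rotation by k-1),
   theta(f_{sigma(k)}) <= ... <= theta(f_{sigma(n)}) <= theta(f_{sigma(1)}) <= ... *)
Definition counterclockwise n (F : 'I_n -> linf) (s : 'S_n) : Prop :=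
  exists2 k : nat, (k < n)%N &
    sorted (fun x y : R => x <= y)
      (rot k [seq angle (lf_vec (F (s i))) | i <- enum 'I_n]).
End LinFun.

(* Main.v *)
Require Import Defs.
From mathcomp Require Import all_boot all_order all_algebra all_fingroup.
From mathcomp Require Import all_classical all_reals all_analysis.
From mathcomp Require Import ring lra zify.
Import Order.TTheory GRing.Theory Num.Theory.
Local Open Scope ring_scope.

Module Aux.
Set Implicit Arguments. Unset Strict Implicit. Unset Printing Implicit Defensive.

Section LinAlg.
Variable R : realType.
Implicit Types (f g h : linf R) (l : seq (linf R)).

Definition cross (u v : R * R) : R := u.1 * v.2 - u.2 * v.1.
Definition cmp l := lf_comp_seq l.
Definition val l := (cmp l).2.
Definition posa f := 0 < f.1.

Lemma pair_eq (u v : R * R) : u.1 = v.1 -> u.2 = v.2 -> u = v.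
Proof. by case: u v => ? ? [? ?] /= -> ->. Qed.

Lemma comp_assoc h g f : lf_comp h (lf_comp g f) = lf_comp (lf_comp h g) f.
Proof. rewrite /lf_comp /lf_a /lf_b /=; apply: pair_eq => /=; ring. Qed.

Lemma comp_id f : lf_comp f (lf_id R) = f.
Proof. rewrite /lf_comp /lf_id /lf_a /lf_b /=; apply: pair_eq => /=; ring. Qed.

Lemma id_comp f : lf_comp (lf_id R) f = f.
Proof. rewrite /lf_comp /lf_id /lf_a /lf_b /=; apply: pair_eq => /=; ring. Qed.

Lemma foldl_comp l acc :
  foldl (fun acc g => lf_comp g acc) acc l = lf_comp (cmp l) acc.
Proof.
elim: l acc => [|g l IH] acc /=; first by rewrite /cmp /lf_comp_seq /= id_comp.
rewrite IH.
have -> : cmp (g :: l) = lf_comp (cmp l) g.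
  by rewrite {1}/cmp /lf_comp_seq /= IH comp_id.
by rewrite comp_assoc.
Qed.

Lemma cmp_nil : cmp [::] = lf_id R. Proof. by []. Qed.
Lemma cmp_cons g l : cmp (g :: l) = lf_comp (cmp l) g.
Proof. by rewrite {1}/cmp /lf_comp_seq /= foldl_comp comp_id. Qed.
Lemma cmp_cat l1 l2 : cmp (l1 ++ l2) = lf_comp (cmp l2) (cmp l1).
Proof. by rewrite /cmp /lf_comp_seq foldl_cat -/(lf_comp_seq l1) foldl_comp. Qed.
Lemma cmp1 f : cmp [:: f] = f.
Proof. by rewrite cmp_cons cmp_nil id_comp. Qed.

Lemma cmp_a l : (cmp l).1 = \prod_(f <- l) f.1.
Proof.
elim: l => [|g l IH]; first by rewrite big_nil.
by rewrite cmp_cons big_cons /= /lf_a IH mulrC.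
Qed.

Lemma perm_a l1 l2 : perm_eq l1 l2 -> (cmp l1).1 = (cmp l2).1.
Proof. by move=> H; rewrite !cmp_a (perm_big _ H). Qed.

Lemma a_pos l : all posa l -> 0 < (cmp l).1.
Proof.
elim: l => [|g l IH] /=; first by rewrite ltr01.
case/andP=> Hg Hl; rewrite cmp_cons /= /lf_a; exact: mulr_gt0 (IH Hl) Hg.
Qed.

Lemma vec_comp g f : lf_vec (lf_comp g f) =
  (g.1 * (lf_vec f).1 + (lf_vec g).1, g.1 * (lf_vec f).2 + (lf_vec g).2).
Proof. rewrite /lf_vec /lf_comp /lf_a /lf_b /=; apply: pair_eq => /=; ring. Qed.

Lemma cross_comp g f w : cross (lf_vec (lf_comp g f)) w =
  g.1 * cross (lf_vec f) w + cross (lf_vec g) w.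
Proof. rewrite vec_comp /cross /=; ring. Qed.

Lemma swapE g f : (lf_comp g f).2 - (lf_comp f g).2 = - cross (lf_vec f) (lf_vec g).
Proof. rewrite /lf_comp /lf_vec /cross /lf_a /lf_b /=; ring. Qed.

Lemma rotE l1 l2 : val (l1 ++ l2) - val (l2 ++ l1) =
  - cross (lf_vec (cmp l1)) (lf_vec (cmp l2)).
Proof. by rewrite /val !cmp_cat swapE. Qed.

Lemma crossC u v : cross u v = - cross v u.
Proof. rewrite /cross; ring. Qed.

Lemma cross_cmp_ge0 w l : all posa l ->
  (forall x, x \in l -> 0 <= cross (lf_vec x) w) -> 0 <= cross (lf_vec (cmp l)) w.
Proof.
elim: l => [|g l IH] /=.
  by move=> _ _; rewrite /cross /lf_vec /lf_id /lf_a /lf_b /= subrr !mul0r subrr.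
case/andP=> Hg Hl H; rewrite cmp_cons cross_comp.
apply: addr_ge0; last by apply: IH => // x Hx; apply: H; rewrite inE Hx orbT.
apply: mulr_ge0; first by apply: ltW; apply: a_pos.
by apply: H; rewrite inE eqxx.
Qed.

Lemma cross_cmp_le0 w l : all posa l ->
  (forall x, x \in l -> cross (lf_vec x) w <= 0) -> cross (lf_vec (cmp l)) w <= 0.
Proof.
move=> Hl H; rewrite -oppr_ge0 -(opprK w) .
have E : forall u v : R * R, - cross u v = cross u (- v.1, - v.2).
  by move=> u v; rewrite /cross /=; ring.
rewrite E; apply: cross_cmp_ge0 => // x Hx.
by rewrite -E oppr_ge0 opprK; exact: H.
Qed.

Lemma cross_cmp_eq0 w l : all posa l ->
  (forall x, x \in l -> cross (lf_vec x) w = 0) -> cross (lf_vec (cmp l)) w = 0.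
Proof.
move=> Hl H; apply/eqP; rewrite eq_le; apply/andP; split.
  by apply: cross_cmp_le0 => // x Hx; rewrite H.
by apply: cross_cmp_ge0 => // x Hx; rewrite H.
Qed.

End LinAlg.
Arguments posa {R}.
Arguments cmp {R}.
Arguments val {R}.
Arguments cross {R}.


Section Trig.
Variable R : realType.

Definition rep (v : R * R) (p : R) : Prop :=
  exists2 r : R, 0 < r & v = (r * cos p, r * sin p).

Lemma rep_cross u v a b : rep u a -> rep v b ->
  exists2 k : R, 0 < k & cross u v = k * sin (b - a).
Proof.
move=> [r Hr ->] [s Hs ->]; exists (r * s); first exact: mulr_gt0.
rewrite /cross /= sinB; ring.
Qed.

Lemma sin_ge0 (x : R) : 0 <= x -> x <= pi -> 0 <= sin x.
Proof. by move=> H1 H2; apply: sin_ge0_pi; rewrite H1 H2. Qed.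

Lemma sin_le0 (x : R) : - pi <= x -> x <= 0 -> sin x <= 0.
Proof.
move=> H1 H2; rewrite -(opprK x) sinN oppr_le0; apply: sin_ge0.
  by rewrite oppr_ge0. by rewrite lerNl.
Qed.

Lemma sin_lt0 (x : R) : pi < x -> x < pi *+ 2 -> sin x < 0.
Proof.
move=> H1 H2; have -> : x = (x - pi) + pi by rewrite subrK.
rewrite sinDpi oppr_lt0; apply: sin_gt0_pi.
by apply/andP; split; rewrite ?subr_gt0 // ltrBlDr -mulr2n.
Qed.

Lemma sin_lt0' (x : R) : - pi < x -> x < 0 -> sin x < 0.
Proof.
move=> H1 H2; rewrite -(opprK x) sinN oppr_lt0; apply: sin_gt0_pi.
by rewrite oppr_gt0 H2 /= ltrNl.
Qed.

Lemma sin_gt0 (x : R) : 0 < x -> x < pi -> 0 < sin x.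
Proof. by move=> H1 H2; apply: sin_gt0_pi; rewrite H1 H2. Qed.

Lemma rep_shift v (p : R) : rep v p -> rep v (p + pi *+ 2).
Proof. by move=> [r Hr ->]; exists r => //; rewrite sinD2pi cosD2pi. Qed.

Lemma rep_shiftN v (p : R) : rep v p -> rep v (p - pi *+ 2).
Proof.
move=> [r Hr ->]; exists r => //.
by rewrite -(sinD2pi (p - pi *+ 2)) -(cosD2pi (p - pi *+ 2)) subrK.
Qed.

Lemma rep_shiftn v (p : R) n : rep v p -> rep v (p + pi *+ 2 *+ n) /\ rep v (p - pi *+ 2 *+ n).
Proof.
move=> H; elim: n => [|n [IH1 IH2]]; first by rewrite !mulr0n addr0 subr0.
rewrite mulrS; split.
  by rewrite addrCA addrC; apply: rep_shift.
by rewrite opprD addrA [_ - pi *+ 2 - _]addrAC; apply: rep_shiftN.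
Qed.

Lemma rep_shiftz v (p : R) (m : int) : rep v p -> rep v (p + pi *+ 2 * m%:~R).
Proof.
move=> H; case: m => n.
  by rewrite -pmulrn mulr_natr; case: (rep_shiftn n H).
rewrite NegzE intrN mulrN -pmulrn mulr_natr; by case: (rep_shiftn n.+1 H).
Qed.

Lemma rep_window v (p a : R) : rep v p -> exists2 q, rep v q & a <= q < a + pi *+ 2.
Proof.
move=> H; set T := pi *+ 2.
have T0 : 0 < T by rewrite /T mulrn_wgt0 // pi_gt0.
set x := (p - a) / T; set m := Num.floor x.
exists (p + T * (- m)%:~R); first exact: rep_shiftz.
have := floor_itv x; rewrite -/m intrD => /andP[H1 H2].
have E1 : m%:~R * T <= p - a.
  by rewrite -ler_pdivlMr.
have E2 : p - a < (m%:~R + 1%:~R) * T.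
  by rewrite -ltr_pdivrMr.
rewrite intrN mulrN [T * _]mulrC.
move: E2; rewrite mulrDl mul1r => E2.
apply/andP; split; lra.
Qed.

Lemma norm_gt0 (v : R * R) : v != (0, 0) -> 0 < v.1 ^+ 2 + v.2 ^+ 2.
Proof.
case: v => x y /= Hv; move: Hv.
have [->|Hx] := eqVneq x 0 => Hv.
  have Hy : y != 0 by apply: contraNneq Hv => ->.
  have -> : (0:R) ^+ 2 = 0 by rewrite expr2 mul0r.
  by rewrite add0r lt_def sqrf_eq0 Hy sqr_ge0.
rewrite ltr_wpDr ?sqr_ge0 //.
by rewrite lt_def sqrf_eq0 Hx sqr_ge0.
Qed.

End Trig.

Section Angle.
Variable R : realType.

Lemma sqrt_sq (r : R) : 0 <= r -> Num.sqrt (r ^+ 2) = r.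
Proof. by move=> H; rewrite sqrtr_sqr ger0_norm. Qed.

Lemma cos2pB (a : R) : cos (2 * pi - a) = cos a.
Proof. by rewrite mulr_natl cosB cos2pi sin2pi mul1r mul0r addr0. Qed.

Lemma sin2pB (a : R) : sin (2 * pi - a) = - sin a.
Proof. by rewrite mulr_natl sinB cos2pi sin2pi mul1r mul0r sub0r. Qed.

Lemma angle_of_rep (v : R * R) p : rep v p ->
  angle v = if 0 <= sin p then acos (cos p) else 2 * pi - acos (cos p).
Proof.
move=> [r Hr ->]; rewrite /angle /=.
have -> : (r * cos p) ^+ 2 + (r * sin p) ^+ 2 = r ^+ 2.
  by rewrite !exprMn -mulrDr cos2Dsin2 mulr1.
rewrite sqrt_sq ?(ltW Hr) // [r * cos p]mulrC mulfK ?gt_eqF // pmulr_rge0 //.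
Qed.

Lemma angle_rep (v : R * R) : v != (0, 0) -> rep v (angle v).
Proof.
move=> Hv; have H0 := norm_gt0 Hv.
case: v Hv H0 => x y /= Hv H0.
set r := Num.sqrt (x ^+ 2 + y ^+ 2).
have Hr : 0 < r by rewrite sqrtr_gt0.
have Hr2 : r ^+ 2 = x ^+ 2 + y ^+ 2 by rewrite sqr_sqrtr // ltW.
have Hx : `|x| <= r.
  by rewrite -sqrtr_sqr ler_sqrt ?addr_ge0 ?sqr_ge0 // lerDl sqr_ge0.
have Ht : -1 <= x / r <= 1.
  by rewrite -ler_norml normrM normfV (gtr0_norm Hr) ler_pdivrMr // mul1r.
have HS : r * Num.sqrt (1 - (x / r) ^+ 2) = `|y|.
  have -> : 1 - (x / r) ^+ 2 = (y / r) ^+ 2.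
    by rewrite !expr_div_n Hr2; field; rewrite -Hr2 sqrf_eq0 gt_eqF.
  by rewrite sqrtr_sqr normrM normfV (gtr0_norm Hr) mulrC mulfVK ?gt_eqF.
rewrite /angle /= -/r; exists r => //.
case: ifP => Hy.
  rewrite acosK ?inE // sin_acos // HS ger0_norm //.
  by congr pair; rewrite mulrC mulfVK ?gt_eqF.
rewrite cos2pB sin2pB acosK ?inE // sin_acos // mulrN HS ltr0_norm ?opprK; last by rewrite ltNge Hy.
by congr pair; rewrite mulrC mulfVK ?gt_eqF.
Qed.

Lemma angle_range (v : R * R) : v != (0, 0) -> 0 <= angle v < 2 * pi.
Proof.
move=> Hv; have H0 := norm_gt0 Hv.
case: v Hv H0 => x y /= Hv H0.
set r := Num.sqrt (x ^+ 2 + y ^+ 2).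
have Hr : 0 < r by rewrite sqrtr_gt0.
have Hr2 : r ^+ 2 = x ^+ 2 + y ^+ 2 by rewrite sqr_sqrtr // ltW.
have Hx : `|x| <= r.
  by rewrite -sqrtr_sqr ler_sqrt ?addr_ge0 ?sqr_ge0 // lerDl sqr_ge0.
have Ht : -1 <= x / r <= 1.
  by rewrite -ler_norml normrM normfV (gtr0_norm Hr) ler_pdivrMr // mul1r.
have Hpi := pi_gt0 R.
rewrite /angle /= -/r; case: ifP => Hy.
  rewrite acos_ge0 //=; apply: (le_lt_trans (acos_lepi Ht)); lra.
have Ht1 : x / r < 1.
  rewrite lt_neqAle (andP Ht).2 andbT; apply/eqP => E.
  have Ex : x = r by move: E => /(congr1 (fun z => z * r)); rewrite mulfVK ?gt_eqF // mul1r.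
  move: Hr2; rewrite -Ex => Hr2; have /eqP : y ^+ 2 = 0 by lra.
  rewrite sqrf_eq0 => /eqP Ey.
  by move: Hy; rewrite Ey lexx.
have H1 : 0 < acos (x / r) by apply: acos_gt0; rewrite Ht1 (andP Ht).1.
have := acos_lepi Ht => H2.
apply/andP; split; lra.
Qed.

Lemma rep_angle_eq (v w : R * R) p : rep v p -> rep w p -> angle v = angle w.
Proof. by move=> Hv Hw; rewrite (angle_of_rep Hv) (angle_of_rep Hw). Qed.

End Angle.


Section Lift.
Variable R : realType.
Notation item := ((linf R * R)%type).
Implicit Types (it A B X Y : seq item) (x y e : item).

Definition valid x := posa x.1 /\ rep (lf_vec x.1) x.2.
Definition validL it := forall x, x \in it -> valid x.
Definition ordr x y : bool := (x.2 <= y.2) && (y.2 <= x.2 + pi *+ 2).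
Definition LiftI it := validL it /\ pairwise ordr it.
Definition shift x : item := (x.1, x.2 + pi *+ 2).
Definition rotI k it := drop k it ++ map shift (take k it).

Lemma map_fst_shift it : map fst (map shift it) = map fst it.
Proof. by rewrite -map_comp; apply: eq_map. Qed.

Lemma map_fst_rotI k it : map fst (rotI k it) = rot k (map fst it).
Proof. by rewrite /rotI map_cat map_fst_shift map_drop map_take. Qed.

Lemma ordr_shift x y : ordr (shift x) (shift y) = ordr x y.
Proof. by rewrite /ordr /= lerD2r addrAC lerD2r. Qed.

Lemma valid_shift x : valid x -> valid (shift x).
Proof. by case=> H1 H2; split => //=; apply: rep_shift. Qed.

Lemma LiftI_rotI k it : LiftI it -> LiftI (rotI k it).
Proof.
case=> Hv Hp; split.
  move=> x; rewrite /rotI mem_cat => /orP[H|].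
    by apply: Hv; apply: mem_drop H.
  case/mapP=> y Hy ->; apply: valid_shift; apply: Hv; apply: mem_take Hy.
move: Hp; rewrite -{1}(cat_take_drop k it) /rotI !pairwise_cat => /and3P[Ha Ht Hd].
rewrite Hd /= pairwise_map.
have -> : pairwise (fun x y => ordr (shift x) (shift y)) (take k it).
  rewrite (@eq_in_pairwise _ predT _ ordr) ?all_predT //.
  by move=> x y _ _; rewrite ordr_shift.
rewrite andbT; apply/allrelP => y x Hy /mapP[z Hz ->].
move/allrelP: Ha => /(_ z y Hz Hy); rewrite /ordr /= => /andP[H1 H2].
by rewrite H2 lerD2r H1.
Qed.

Lemma LiftI_rem A e B : LiftI (A ++ e :: B) -> LiftI (A ++ B).
Proof.
case=> Hv Hp; split.
  move=> x; rewrite mem_cat => /orP[H|H]; apply: Hv; rewrite mem_cat.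
    by rewrite H.
  by rewrite inE H !orbT.
move: Hp; rewrite !pairwise_cat => /and3P[Ha HA HB].
move: HB; rewrite /= => /andP[_ HB].
rewrite HA HB !andbT; apply/allrelP => x y Hx Hy.
by move/allrelP: Ha => /(_ x y Hx); apply; rewrite inE Hy orbT.
Qed.

Lemma IR A B e j0 : (j0 <= size A + size B)%N ->
  exists X, exists Y, exists e', exists j1,
    [/\ (j1 <= (size A + size B).+1)%N, rotI j1 (A ++ e :: B) = X ++ e' :: Y,
        e'.1 = e.1 & map fst (X ++ Y) = rot j0 (map fst (A ++ B))].
Proof.
move=> Hj.
case: (leqP j0 (size A)) => Hja.
  rewrite -(cat_take_drop j0 A).
  set A1 := take j0 A; set A2 := drop j0 A.
  have HA1 : size A1 = j0 by rewrite /A1 size_take_min; apply/minn_idPl.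
  exists A2, (B ++ map shift A1), e, j0; split => //.
  - by rewrite /A1 /A2 cat_take_drop; apply: leq_trans Hj _; apply: leqnSn.
  - rewrite /rotI -catA -{1 2}HA1 drop_size_cat // take_size_cat //.
    by rewrite -catA.
  - rewrite !map_cat map_fst_shift -catA -HA1 -(size_map fst A1) rot_size_cat.
    by rewrite catA.
set i := (j0 - size A)%N.
have Hi : (i <= size B)%N by rewrite /i leq_subLR.
rewrite -(cat_take_drop i B).
set B1 := take i B; set B2 := drop i B.
have HB1 : size B1 = i by rewrite /B1 size_take_min; apply/minn_idPl.
exists (B2 ++ map shift A), (map shift B1), (shift e), (size A + i).+1; split => //.
- by rewrite ltnS leq_add2l size_cat HB1 leq_addr.
- rewrite /rotI.
  have -> : A ++ e :: B1 ++ B2 = (A ++ e :: B1) ++ B2 by rewrite -catA.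
  have Hs : size (A ++ e :: B1) = (size A + i).+1 by rewrite size_cat /= HB1 addnS.
  rewrite -Hs drop_size_cat // take_size_cat //.
  by rewrite map_cat /= -catA.
- rewrite !map_cat map_fst_shift map_fst_shift.
  have -> : j0 = size (map fst A ++ map fst B1).
    by rewrite size_cat !size_map HB1 /i subnKC // ltnW.
  by rewrite catA rot_size_cat -catA.
Qed.

End Lift.
Arguments valid {R}.
Arguments ordr {R}.
Arguments shift {R}.
Arguments validL {R}.
Arguments LiftI {R}.
Arguments rotI {R}.


Section Split.
Variable R : realType.
Notation item := ((linf R * R)%type).
Implicit Types (it A B X Y : seq item) (x y e : item).

Lemma pairwise_last (T : eqType) (r : rel T) (x : T) s :
  pairwise r (x :: s) -> forall z, z \in x :: s -> z = last x s \/ r z (last x s).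
Proof.
rewrite lastI pairwise_rcons => /andP[H _] z.
rewrite mem_rcons inE => /orP[/eqP->|Hz]; first by left.
by right; move/allP: H => /(_ z Hz).
Qed.

Lemma pairwise_head (T : eqType) (r : rel T) (x : T) s :
  pairwise r (x :: s) -> forall z, z \in s -> r x z.
Proof. by rewrite pairwise_cons => /andP[/allP H _]. Qed.

Lemma cross_sin (u v : R * R) (a b : R) : rep u a -> rep v b ->
  (0 <= cross u v) = (0 <= sin (b - a)).
Proof. by move=> Hu Hv; case: (rep_cross Hu Hv) => k Hk ->; rewrite pmulr_rge0. Qed.

Lemma cross_sin_le (u v : R * R) (a b : R) : rep u a -> rep v b ->
  (cross u v <= 0) = (sin (b - a) <= 0).
Proof. by move=> Hu Hv; case: (rep_cross Hu Hv) => k Hk ->; rewrite pmulr_rle0. Qed.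

Lemma split_lemma x1 s (W : R * R) (psi : R) :
  LiftI (x1 :: s) -> rep W psi -> x1.2 <= psi -> psi < x1.2 + pi *+ 2 -> psi != x1.2 ->
  0 <= cross (lf_vec x1.1) W -> 0 <= cross W (lf_vec (last x1 s).1) ->
  forall z, z \in x1 :: s -> psi - pi <= z.2 <= psi + pi.
Proof.
move=> [Hv Hp] HW H1 H2 Hne Hc1 Hc2.
have Hpi := pi_gt0 R.
have V1 : valid x1 by apply: Hv; rewrite inE eqxx.
have Vm : valid (last x1 s) by apply: Hv; rewrite mem_last.
have Hx : psi - x1.2 <= pi.
  rewrite leNgt; apply/negP => Hlt.
  move: Hc1; rewrite (cross_sin V1.2 HW) => Hs.
  have : sin (psi - x1.2) < 0.
    by apply: sin_lt0 => //; move: H2; rewrite mulr2n => H2; lra.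
  by rewrite ltNge Hs.
have Hm1 : x1.2 <= (last x1 s).2 <= x1.2 + pi *+ 2.
  clear -Hp; case: s Hp => [|y s] Hp /=.
    by rewrite lexx /= lerDl mulrn_wge0 // pi_ge0.
  by apply: (pairwise_head Hp); rewrite mem_last.
have Hm : (last x1 s).2 <= psi + pi.
  rewrite leNgt; apply/negP => Hlt.
  move: Hc2; rewrite (cross_sin HW Vm.2) => Hs.
  have : sin ((last x1 s).2 - psi) < 0.
    apply: sin_lt0; first by lra.
    case/andP: Hm1 => _ Hm1.
    have Hpx : x1.2 < psi by rewrite lt_neqAle eq_sym Hne H1.
    rewrite mulr2n; lra.
  by rewrite ltNge Hs.
move=> z Hz; apply/andP; split.
  have : x1.2 <= z.2.
    move: Hz; rewrite inE => /orP[/eqP->|Hz]; first by [].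
    by case/andP: (pairwise_head Hp Hz).
  lra.
case: (pairwise_last Hp Hz) => [->|/andP[Hz1 _]] //; lra.
Qed.

End Split.


Section Key.
Variable R : realType.
Notation item := ((linf R * R)%type).
Implicit Types (it A B X Y : seq item) (x y e : item) (l P Q : seq (linf R)).

Definition vc l := lf_vec (cmp l).

Lemma comp2 (g f : linf R) : (lf_comp g f).2 = g.1 * f.2 + g.2.
Proof. by []. Qed.
Lemma comp1 (g f : linf R) : (lf_comp g f).1 = g.1 * f.1.
Proof. by []. Qed.

Lemma cross_split P Q : cross (vc P) (vc (P ++ Q)) = cross (vc P) (vc Q).
Proof. rewrite /vc cmp_cat vec_comp /cross /=; ring. Qed.

Lemma cross_split_r P Q :
  cross (vc (P ++ Q)) (vc Q) = (cmp Q).1 * cross (vc P) (vc Q).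
Proof. rewrite /vc cmp_cat vec_comp /cross /=; ring. Qed.

Definition Best l := forall P Q, l = P ++ Q -> val l <= val (Q ++ P).

Lemma best_cross l P Q : Best l -> l = P ++ Q -> 0 <= cross (vc P) (vc Q).
Proof.
move=> HB E; have := HB P Q E; rewrite E -subr_le0 rotE oppr_le0 //.
Qed.

Lemma validL_posa it : validL it -> all posa (map fst it).
Proof. by move=> H; apply/allP => f /mapP[x Hx ->]; case: (H x Hx). Qed.

Lemma validL_sub it1 it2 : validL it2 -> {subset it1 <= it2} -> validL it1.
Proof. by move=> H Hs x Hx; apply: H; apply: Hs. Qed.

Lemma last_ne (T : eqType) (a b : T) (s : seq T) : s != [::] -> last a s = last b s.
Proof. by case: s. Qed.

Lemma head_in (T : eqType) (a : T) (s : seq T) : s != [::] -> head a s \in s.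
Proof. by case: s => // x s _; rewrite mem_head. Qed.

Lemma sin_ge0' (x : R) : 0 <= x <= pi -> 0 <= sin x.
Proof. by case/andP=> H1 H2; apply: sin_ge0. Qed.

Lemma E1 X Y e (psi : R) : LiftI (X ++ e :: Y) -> X != [::] -> Y != [::] ->
  rep (vc (map fst (X ++ Y))) psi ->
  (head e X).2 <= psi -> psi < (head e X).2 + pi *+ 2 -> psi != (head e X).2 ->
  0 <= cross (lf_vec (head e X).1) (vc (map fst (X ++ Y))) ->
  0 <= cross (vc (map fst (X ++ Y))) (lf_vec (last e Y).1) ->
  val (map fst (X ++ e :: Y)) <= val (e.1 :: map fst (X ++ Y)).
Proof.
move=> HL HX HY HW H1 H2 Hne Hc1 Hc2.
have HL' := LiftI_rem HL.
case: HL => Hv Hp; case: (HL') => Hv' Hp'.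
have Hpi := pi_gt0 R.
have Hb : forall z, z \in X ++ Y -> psi - pi <= z.2 <= psi + pi.
  case: X HX HL' HW H1 H2 Hne Hc1 Hc2 {Hv Hp Hv' Hp'} => [//|x1 X'] _ HL' HW H1 H2 Hne Hc1 Hc2.
  move=> z Hz; apply: (split_lemma HL' HW H1 H2 Hne Hc1) => //.
  by rewrite last_cat (last_ne _ e HY).
set W := vc (map fst (X ++ Y)) in HW Hc1 Hc2.
move: Hp; rewrite pairwise_cat => /and3P[HXeY _ HeY].
have HxE : forall x, x \in X -> ordr x e.
  by move=> x Hx; move/allrelP: HXeY => /(_ x e Hx); apply; rewrite inE eqxx.
have HeYo : forall y, y \in Y -> ordr e y.
  by move=> y Hy; apply: (pairwise_head HeY).
have Ve : valid e by apply: Hv; rewrite mem_cat inE eqxx orbT.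
have VX : validL X by apply: (@validL_sub X (X ++ e :: Y) Hv) => z Hz; rewrite mem_cat Hz.
have VY : validL Y by apply: (@validL_sub Y (X ++ e :: Y) Hv) => z Hz; rewrite mem_cat inE Hz !orbT.
have PX := validL_posa VX; have PY := validL_posa VY.
set G := cmp (map fst X); set H := cmp (map fst Y); set E := e.1.
have HG0 : 0 < G.1 by apply: a_pos.
have HH0 : 0 < H.1 by apply: a_pos.
have EA : cmp (map fst (X ++ e :: Y)) = lf_comp H (lf_comp E G).
  by rewrite map_cat /= cmp_cat cmp_cons comp_assoc.
have EB : cmp (e.1 :: map fst (X ++ Y)) = lf_comp (lf_comp H G) E.
  by rewrite cmp_cons map_cat cmp_cat.
have EW : W = lf_vec (lf_comp H G) by rewrite /W /vc map_cat cmp_cat.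
rewrite /val EA EB.
case: (leP e.2 psi) => He.
-
  have Hcx : 0 <= cross (lf_vec G) (lf_vec E).
    apply: cross_cmp_ge0 => // f /mapP[x Hx ->].
    case: (VX x Hx) => _ Rx.
    rewrite (cross_sin Rx Ve.2); apply: sin_ge0'.
    case/andP: (HxE x Hx) => Ho1 _.
    have := Hb x; rewrite mem_cat Hx => /(_ isT) /andP[Hb1 _].
    apply/andP; split; lra.
  rewrite -comp_assoc comp2 [X in _ <= X]comp2.
  rewrite lerD2r; apply: ler_wpM2l; first exact: ltW.
  by rewrite -subr_le0 swapE oppr_le0.
-
  set y0 := head e Y; have Hy0 : y0 \in Y by apply: head_in.
  have Hy0b : e.2 <= psi + pi.
    case/andP: (HeYo y0 Hy0) => Ho _.
    have := Hb y0; rewrite mem_cat Hy0 orbT => /(_ isT) /andP[_ Hb2]; lra.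
  have HcW : 0 <= cross W (lf_vec E).
    have RW : rep W psi by [].
    rewrite (cross_sin RW Ve.2); apply: sin_ge0'; apply/andP; split; lra.
  have HcE : cross (lf_vec H) (lf_vec E) <= 0.
    apply: cross_cmp_le0 => // f /mapP[y Hy ->].
    case: (VY y Hy) => _ Ry.
    rewrite (cross_sin_le Ry Ve.2).
    case/andP: (HeYo y Hy) => Ho1 _.
    have := Hb y; rewrite mem_cat Hy orbT => /(_ isT) /andP[_ Hb2].
    apply: sin_le0; lra.
  apply: (@le_trans _ _ (lf_comp E (lf_comp H G)).2).
    rewrite !comp_assoc comp2 [X in _ <= X]comp2 !comp1 [E.1 * H.1]mulrC.
    rewrite lerD2l -subr_le0 swapE crossC opprK //.
  by rewrite -subr_ge0 swapE crossC opprK -EW.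
Qed.

End Key.


Section Key2.
Variable R : realType.
Notation item := ((linf R * R)%type).
Implicit Types (it A B X Y : seq item) (x y e : item) (l P Q : seq (linf R)).

Definition dot (u v : R * R) : R := u.1 * v.1 + u.2 * v.2.
Definition npar (f : linf R) (W : R * R) : bool :=
  ~~ ((cross (lf_vec f) W == 0) && (0 < dot (lf_vec f) W)).

Lemma rep_dot (u v : R * R) a b : rep u a -> rep v b ->
  exists2 k : R, 0 < k & dot u v = k * cos (b - a).
Proof.
move=> [r Hr ->] [s Hs ->]; exists (r * s); first exact: mulr_gt0.
rewrite /dot /= cosB; ring.
Qed.

Lemma best_first f l : Best (f :: l) -> 0 <= cross (lf_vec f) (vc (f :: l)).
Proof.
move=> HB; have := best_cross HB (P := [:: f]) (Q := l) erefl.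
by rewrite -cross_split /vc cmp1.
Qed.

Lemma best_last l f : posa f -> Best (rcons l f) -> 0 <= cross (vc (rcons l f)) (lf_vec f).
Proof.
move=> Hf HB; have := best_cross HB (P := l) (Q := [:: f]); rewrite -cats1 => /(_ erefl) H.
have E := cross_split_r l [:: f]; rewrite /vc cmp1 in E H.
rewrite /vc E.
by apply: mulr_ge0 => //; apply: ltW.
Qed.

Lemma E2p X Y e : LiftI (X ++ e :: Y) -> Best (map fst (X ++ Y)) ->
  vc (map fst (X ++ Y)) != (0, 0) ->
  (X != [::] -> npar (head e X).1 (vc (map fst (X ++ Y)))) ->
  exists k, (k <= size (X ++ e :: Y))%N /\
    val (rot k (map fst (X ++ e :: Y))) <= val (e.1 :: map fst (X ++ Y)).
Proof.
case: X => [|x1 X'].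
  by move=> *; exists 0%N; split => //; rewrite rot0.
case/lastP: Y => [|Y1 ym].
  move=> *; exists (size (x1 :: X')); split; first by rewrite size_cat leq_addr.
  by rewrite map_cat -(size_map fst) rot_size_cat /= cats0.
move=> HL HB HW /(_ isT) Hnp.
exists 0%N; split => //; rewrite rot0.
set W := vc (map fst ((x1 :: X') ++ rcons Y1 ym)) in HB HW Hnp *.
case: (HL) => Hv _.
have V1 : valid x1 by apply: Hv; rewrite inE eqxx.
have Vm : valid ym by apply: Hv; rewrite mem_cat; apply/orP; right; rewrite in_cons mem_rcons mem_head orbT.
have RW := angle_rep HW.
case: (rep_window (x1.2) RW) => psi Rpsi /andP[H1 H2].
have Hne : psi != x1.2.
  apply/eqP => E; move: Hnp; rewrite /npar E in Rpsi *.
  case: (rep_cross V1.2 Rpsi) => k1 Hk1 ->; case: (rep_dot V1.2 Rpsi) => k2 Hk2 ->.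
  by rewrite subrr sin0 cos0 mulr0 mulr1 eqxx Hk2.
apply: (E1 HL _ _ Rpsi H1 H2 Hne) => //.
- by rewrite -size_eq0 size_rcons.
- have := best_first (f := x1.1) (l := map fst (X' ++ rcons Y1 ym)) HB.
  by move=> H; rewrite /W /=; exact: H.
- rewrite last_rcons.
  have E : map fst ((x1 :: X') ++ rcons Y1 ym) = rcons (map fst ((x1 :: X') ++ Y1)) ym.1.
    by rewrite -!cats1 !map_cat catA.
  rewrite /W E in HB *; apply: best_last => //; exact: Vm.1.
Qed.

End Key2.


Section Main.
Variable R : realType.
Notation item := ((linf R * R)%type).
Implicit Types (it A B X Y : seq item) (x y e : item) (l P Q : seq (linf R)).

Lemma rot_rot_ex (T : Type) (L : seq T) k j : (k <= size L)%N -> (j <= size L)%N ->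
  exists c, (c <= size L)%N /\ rot k (rot j L) = rot c L.
Proof.
move=> Hk Hj; rewrite rot_add_mod //.
case: ifP => H; first by exists (k + j)%N.
by exists (k + j - size L)%N; split => //; lia.
Qed.

Lemma take_find_all (T : Type) (a : pred T) (s : seq T) :
  all (predC a) (take (find a s) s).
Proof. by elim: s => //= x s IH; case: ifP => //= ->. Qed.

Lemma cmp_eq l1 l2 : perm_eq l1 l2 -> val l1 = val l2 -> cmp l1 = cmp l2.
Proof. by move=> Hp Hv; apply: pair_eq; [exact: perm_a | exact: Hv]. Qed.

Lemma val_cons_eq (g : linf R) l1 l2 : cmp l1 = cmp l2 -> val (g :: l1) = val (g :: l2).
Proof. by move=> H; rewrite /val !cmp_cons H. Qed.

Lemma validL_posa' it : LiftI it -> all posa (map fst it).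
Proof. by case=> H _; apply: validL_posa. Qed.

Lemma head_fst X Y (d : item) (d' : linf R) : X != [::] ->
  (head d X).1 = head d' (map fst (X ++ Y)).
Proof. by case: X. Qed.

Lemma E2 X Y e : LiftI (X ++ e :: Y) -> Best (map fst (X ++ Y)) ->
  exists k, (k <= size (X ++ e :: Y))%N /\
    val (rot k (map fst (X ++ e :: Y))) <= val (e.1 :: map fst (X ++ Y)).
Proof.
move=> HL HB.
have HL' := LiftI_rem HL.
have Pt := validL_posa' HL'.
set tau := map fst (X ++ Y) in HB Pt *.
have Etau : tau = map fst X ++ map fst Y by rewrite /tau map_cat.
have [Hc0|Hc0] := eqVneq (cross (vc (map fst X)) (vc (map fst Y))) 0.
  exists (size X); split; first by rewrite size_cat leq_addr.
  rewrite map_cat /= -(size_map fst X) rot_size_cat /=.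
  have Ec : cmp (map fst Y ++ map fst X) = cmp tau.
    rewrite Etau; apply: cmp_eq; first by rewrite perm_catC.
    by apply/eqP; rewrite eq_sym -subr_eq0 rotE Hc0 oppr0.
  by rewrite (val_cons_eq _ Ec).
set W := vc tau.
have HXW : cross (vc (map fst X)) W = cross (vc (map fst X)) (vc (map fst Y)).
  by rewrite /W Etau cross_split.
have HW : W != (0, 0).
  apply: contra Hc0 => /eqP HW0; rewrite -HXW HW0 /cross /= !mulr0 subrr.
  by [].
have PX : all posa (map fst X) by move: Pt; rewrite Etau all_cat => /andP[].
set j0 := find (fun f => npar f W) tau.
have Hj0 : (j0 < size tau)%N.
  rewrite -has_find; apply/negPn/negP => /hasPn Hn.
  move: Hc0; rewrite -HXW cross_cmp_eq0 ?eqxx //.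
  move=> f Hf; have := Hn f; rewrite Etau mem_cat Hf /= => /(_ isT).
  by rewrite /npar negbK => /andP[/eqP].
set tau' := rot j0 tau.
have Ecmp : cmp tau' = cmp tau.
  apply: cmp_eq; first by rewrite perm_rot.
  rewrite /tau' /rot -[in RHS](cat_take_drop j0 tau); apply/eqP; rewrite eq_sym -subr_eq0 rotE oppr_eq0.
  have -> : cross (vc (take j0 tau)) (vc (drop j0 tau)) = cross (vc (take j0 tau)) W.
    by rewrite -cross_split cat_take_drop.
  apply/eqP; apply: cross_cmp_eq0.
    by move: Pt; rewrite -{1}(cat_take_drop j0 tau) all_cat => /andP[].
  move=> f Hf; have := allP (take_find_all (fun f => npar f W) tau) f Hf.
  by rewrite /= /npar negbK => /andP[/eqP].
have Best' : Best tau'.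
  move=> P Q HPQ.
  have -> : val tau' = val tau by rewrite /val Ecmp.
  have Hs : (size P <= size tau)%N by rewrite -(size_rot j0 tau) -/tau' HPQ size_cat leq_addr.
  have -> : Q ++ P = rot (size P) tau' by rewrite HPQ rot_size_cat.
  have [c [Hc ->]] := rot_rot_ex Hs (ltnW Hj0).
  by apply: HB; rewrite cat_take_drop.
have Hsz : (j0 <= size X + size Y)%N by rewrite -size_cat -(size_map fst) ltnW.
have [X' [Y' [e' [j1 [Hj1 Hrot He' Hfst]]]]] := IR (A:=X) (B:=Y) e Hsz.
have HL2 : LiftI (X' ++ e' :: Y') by rewrite -Hrot; apply: LiftI_rotI.
have Hfst' : map fst (X' ++ Y') = tau' by rewrite Hfst.
have Hvc : vc (map fst (X' ++ Y')) = W by rewrite Hfst' /vc /W Ecmp.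
have Hhead : X' != [::] -> npar (head e' X').1 W.
  move=> HX'.
  have -> : (head e' X').1 = head e.1 tau'.
    by rewrite -Hfst' (head_fst Y' e' e.1 HX').
  have -> : head e.1 tau' = nth e.1 tau j0.
    rewrite /tau' /rot -nth0 nth_cat size_drop subn_gt0 Hj0 nth_drop addn0 //.
  by have H := @nth_find _ e.1 (fun f => npar f W) tau; apply: H; rewrite has_find.
have B2 : Best (map fst (X' ++ Y')) by rewrite Hfst'.
have W2 : vc (map fst (X' ++ Y')) != (0, 0) by rewrite Hvc.
have N2 : X' != [::] -> npar (head e' X').1 (vc (map fst (X' ++ Y'))) by rewrite Hvc.
have [k [Hk Hv]] := E2p HL2 B2 W2 N2.
have Em : map fst (X' ++ e' :: Y') = rot j1 (map fst (X ++ e :: Y)) by rewrite -Hrot map_fst_rotI.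
have Hj1' : (j1 <= size (map fst (X ++ e :: Y)))%N by rewrite size_map size_cat /= addnS.
have Hk' : (k <= size (map fst (X ++ e :: Y)))%N.
  by move: Hk; rewrite -(size_map fst) Em size_rot.
have [c [Hc Ec]] := rot_rot_ex Hk' Hj1'.
exists c; split; first by rewrite -(size_map fst).
rewrite -Ec -Em; apply: (le_trans Hv).
by rewrite He' Hfst' (val_cons_eq _ Ecmp).
Qed.



End Main.


Section Main2.
Variable R : realType.
Notation item := ((linf R * R)%type).
Implicit Types (it A B X Y : seq item) (x y e : item) (l P Q t : seq (linf R)).

Lemma exists_min (g : nat -> R) m :
  exists k, (k <= m)%N /\ forall j, (j <= m)%N -> g k <= g j.
Proof.
elim: m => [|m [k [Hk IH]]].
  by exists 0%N; split => // j; rewrite leqn0 => /eqP ->.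
case: (leP (g k) (g m.+1)) => H.
  exists k; split; first by apply: leqW.
  move=> j; rewrite leq_eqVlt => /orP[/eqP->|Hj] //; exact: IH.
exists m.+1; split => // j; rewrite leq_eqVlt => /orP[/eqP->|Hj] //.
by apply: (le_trans (ltW H)); exact: IH.
Qed.

Lemma val_cons (g : linf R) l : val (g :: l) = (cmp l).1 * g.2 + val l.
Proof. by rewrite /val cmp_cons. Qed.

Lemma main_ind t : forall it, LiftI it -> perm_eq (map fst it) t ->
  exists k, (k <= size it)%N /\ val (rot k (map fst it)) <= val t.
Proof.
elim: t => [|g t IH] it HL Hp.
  have := perm_size Hp; rewrite size_map => /eqP; rewrite size_eq0 => /eqP ->.
  by exists 0%N.
have : g \in map fst it by rewrite (perm_mem Hp) mem_head.
case/mapP=> x Hx Hg; subst g.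
move: HL Hp; case/splitPr: Hx => A B HL Hp.
have HL' := LiftI_rem HL.
have Hp' : perm_eq (map fst (A ++ B)) t.
  rewrite -(perm_cons x.1); apply: perm_trans Hp.
  rewrite !map_cat /= -cat1s; exact/permPl/perm_catCA.
have [k' [Hk' Hv']] := IH _ HL' Hp'.
set L' := map fst (A ++ B).
have [ks [Hks Hmin]] := exists_min (fun k => val (rot k L')) (size L').
set tau := rot ks L'.
have HB : Best tau.
  move=> P Q HPQ.
  have Hs : (size P <= size L')%N by rewrite -(size_rot ks L') -/tau HPQ size_cat leq_addr.
  have -> : Q ++ P = rot (size P) tau by rewrite HPQ rot_size_cat.
  have [c [Hc ->]] := rot_rot_ex Hs Hks.
  exact: Hmin.
have Hpt : perm_eq tau t by rewrite /tau perm_rot.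
have Hle1 : val (x.1 :: tau) <= val (x.1 :: t).
  rewrite !val_cons (perm_a Hpt) lerD2l.
  apply: le_trans (Hmin k' _) Hv'.
  by rewrite /L' size_map.
have Hsz : (ks <= size A + size B)%N by rewrite -size_cat -(size_map fst).
have [X [Y [e' [j1 [Hj1 Hrot He' Hfst]]]]] := IR (A:=A) (B:=B) x Hsz.
have HL2 : LiftI (X ++ e' :: Y) by rewrite -Hrot; apply: LiftI_rotI.
have HB2 : Best (map fst (X ++ Y)) by rewrite Hfst.
have [k [Hk Hv]] := E2 HL2 HB2.
have Em : map fst (X ++ e' :: Y) = rot j1 (map fst (A ++ x :: B)) by rewrite -Hrot map_fst_rotI.
have Hj1' : (j1 <= size (map fst (A ++ x :: B)))%N by rewrite size_map size_cat /= addnS.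
have Hk2 : (k <= size (map fst (A ++ x :: B)))%N.
  by move: Hk; rewrite -(size_map fst) Em size_rot.
have [c [Hc Ec]] := rot_rot_ex Hk2 Hj1'.
exists c; split; first by rewrite -(size_map fst).
rewrite -Ec -Em; apply: (le_trans Hv); apply: le_trans Hle1.
by rewrite He' Hfst.
Qed.

End Main2.


Section Final.
Variable R : realType.
Notation item := ((linf R * R)%type).
Implicit Types (it A B X Y : seq item) (x y e : item) (l P Q t : seq (linf R)).

Lemma prefix_cross it (psi : R) : LiftI it -> rep (vc (map fst it)) psi ->
  (forall z, z \in it -> psi - pi <= z.2 <= psi + pi) ->
  forall c, 0 <= cross (vc (map fst (take c it))) (vc (map fst (drop c it))).
Proof.
move=> [Hv Hp] HW Hb c.
set V := vc (map fst it) in HW.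
have Pit := validL_posa Hv.
have Eit : map fst it = map fst (take c it) ++ map fst (drop c it) by rewrite -map_cat cat_take_drop.
have PP : all posa (map fst (take c it)) by move: Pit; rewrite Eit all_cat => /andP[].
have PQ : all posa (map fst (drop c it)) by move: Pit; rewrite Eit all_cat => /andP[].
have Hpi := pi_gt0 R.
have HP : cross (vc (map fst (take c it))) V = cross (vc (map fst (take c it))) (vc (map fst (drop c it))).
  by rewrite /V Eit cross_split.
have HQ : cross V (vc (map fst (drop c it))) = (cmp (map fst (drop c it))).1 * cross (vc (map fst (take c it))) (vc (map fst (drop c it))).
  by rewrite /V Eit cross_split_r.
have Hrel : allrel ordr (take c it) (drop c it).
  by move: Hp; rewrite -{1}(cat_take_drop c it) pairwise_cat => /and3P[].
have [Hall|Hex] := boolP (all (fun z => z.2 <= psi) (take c it)).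
  rewrite -HP; apply: cross_cmp_ge0 => // f /mapP[z Hz ->].
  have Vz : valid z by apply: Hv; apply: mem_take Hz.
  rewrite (cross_sin Vz.2 HW); apply: sin_ge0.
    by rewrite subr_ge0; move/allP: Hall => /(_ z Hz).
  have := Hb z (mem_take Hz) => /andP[H1 _]; lra.
move: Hex; rewrite -has_predC => /hasP[z0 Hz0 /= Hz0'].
rewrite -ltNge in Hz0'.
have HcQ : cross (vc (map fst (drop c it))) V <= 0.
  apply: cross_cmp_le0 => // f /mapP[q Hq ->].
  have Vq : valid q by apply: Hv; apply: mem_drop Hq.
  rewrite crossC oppr_le0 (cross_sin HW Vq.2).
  move/allrelP: Hrel => /(_ z0 q Hz0 Hq) /andP[Ho _].
  have := Hb q (mem_drop Hq) => /andP[_ H2].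
  by apply: sin_ge0; lra.
have HQ0 : 0 < (cmp (map fst (drop c it))).1 by apply: a_pos.
move: HcQ; rewrite crossC oppr_le0 HQ pmulr_rge0 //.
Qed.

Lemma final_rot it (psi : R) : LiftI it -> rep (vc (map fst it)) psi ->
  (forall z, z \in it -> psi - pi <= z.2 <= psi + pi) ->
  forall c, val (map fst it) <= val (rot c (map fst it)).
Proof.
move=> HL HW Hb c.
have := prefix_cross HL HW Hb c.
rewrite map_take map_drop; set L := map fst it => H.
rewrite /rot -[X in val X <= _](cat_take_drop c L).
by rewrite -subr_le0 rotE oppr_le0.
Qed.

Lemma final_rot0 it : vc (map fst it) = (0, 0) -> forall c, val (map fst it) <= val (rot c (map fst it)).
Proof.
move=> HV c; rewrite /rot -{1}(cat_take_drop c (map fst it)) -subr_le0 rotE oppr_le0.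
rewrite -cross_split cat_take_drop HV /cross /= !mulr0 subrr //.
Qed.

End Final.


Section Lift2.
Variable R : realType.
Notation item := ((linf R * R)%type).

Lemma lift_of_ccw (l : seq (linf R)) k : all posa l ->
  (forall f, f \in l -> lf_vec f != (0, 0)) ->
  sorted <=%R (rot k (map (fun f => angle (lf_vec f)) l)) ->
  exists it : seq item, LiftI it /\ map fst it = l.
Proof.
move=> Hp Hn Hs.
set it0 := map (fun f => (f, angle (lf_vec f))) (rot k l).
have HL0 : LiftI it0.
  split.
    move=> x /mapP[f Hf ->]; rewrite mem_rot in Hf; split => /=.
      by move/allP: Hp => /(_ f Hf).
    by apply: angle_rep; apply: Hn.
  rewrite /it0 pairwise_map.
  move: Hs; rewrite -map_rot (sorted_pairwise le_trans) pairwise_map.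
  apply: (sub_in_pairwise (P := mem l)); last by apply/allP => f; rewrite mem_rot.
  move=> f g Hf Hg /= Hfg; rewrite /ordr /= Hfg /=.
  have := angle_range (Hn g Hg) => /andP[_ Hg2].
  have := angle_range (Hn f Hf) => /andP[Hf1 _].
  rewrite mulr_natl in Hg2; rewrite mulr2n; lra.
exists (rotI (size l - k) it0); split; first exact: LiftI_rotI.
rewrite map_fst_rotI /it0 -map_comp map_id.
by have := rotK k l; rewrite /rotr size_rot.
Qed.

End Lift2.

Lemma split_ineq (R : realType) (P Q : seq (linf R)) :
  val (P ++ Q) <= val (Q ++ P) -> 0 <= cross (vc P) (vc Q).
Proof. by rewrite -subr_le0 rotE oppr_le0. Qed.

Lemma perm_enum_map (n : nat) (p : 'S_n) : perm_eq [seq p i | i <- enum 'I_n] (enum 'I_n).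
Proof.
apply: uniq_perm; first by rewrite map_inj_uniq ?enum_uniq //; exact: perm_inj.
  exact: enum_uniq.
move=> x; rewrite mem_enum; apply/mapP; exists ((p^-1)%g x); first by rewrite mem_enum.
by rewrite permKV.
Qed.

End Aux.
Import Aux.
Unset Implicit Arguments.

Theorem mainTheorem14 (R : realType) (n : nat) (F : 'I_n -> linf R) (s : 'S_n) :
  (forall i, monotone_lf (F i)) ->
  (forall i, ~ identical_lf (F i)) ->
  counterclockwise F s ->
  lf_le (fperm F s) (fshift F s 1) ->
  lf_le (fperm F s) (fshift F s n.-1) ->
  (forall i0 : 'I_n, nat_of_ord i0 = 0%N -> theta (F (s i0)) <> theta (fperm F s)) ->
  is_minimum F s.
Proof.
move=> Hmono Hnid [k Hk Hsort] Hs1 Hsn Hth r.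
set sl := [seq F (s i) | i <- enum 'I_n].
have Esl : fperm F s = cmp sl by [].
have Psl : all posa sl by apply/allP => f /mapP[i _ ->]; exact: Hmono.
have Nsl : forall f, f \in sl -> lf_vec f != (0, 0).
  move=> f /mapP[i _ ->]; apply/negP => /eqP E; apply: (Hnid (s i)).
  move: E; rewrite /lf_vec /identical_lf => -[-> /eqP]; rewrite subr_eq0 => /eqP <-.
  by [].
have Hsort' : sorted <=%R (rot k (map (fun f => angle (lf_vec f)) sl)).
  by rewrite /sl -map_comp.
have [it [HL Eit]] := lift_of_ccw Psl Nsl Hsort'.
have Hsz : size sl = n by rewrite size_map size_enum_ord.
have Hrot : forall c, val sl <= val (rot c sl).
  have [V0|V0] := eqVneq (vc sl) (0, 0).
    by rewrite -Eit; apply: final_rot0; rewrite Eit.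
  case: (leqP (size sl) 1) => Hs2.
    by move=> c; case: c => [|c]; rewrite ?rot0 // rot_oversize // (leq_trans Hs2).
  have HV : lf_vec (fperm F s) != (0, 0) by rewrite Esl.
  have Hn0 : (0 < n)%N by rewrite -Hsz; apply: leq_trans Hs2.
  case: it HL Eit => [|x1 its] HL Eit; first by move: Hs2; rewrite -Eit.
  have Vx1 : valid x1 by case: HL => Hv _; apply: Hv; rewrite mem_head.
  have Hc1 : 0 <= cross (lf_vec x1.1) (vc sl).
    have H0 : val sl <= val (rot 1 sl).
      by have := Hs1 0; rewrite /lf_eval /lf_a /lf_b !mulr0 !add0r => H; exact: H.
    move: H0; rewrite -Eit /= rot1_cons -cats1 -cat1s => H.
    have := split_ineq H; rewrite -cross_split /vc cmp1 //.
  have Hc2 : 0 <= cross (vc sl) (lf_vec (last x1 its).1).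
    have El : sl = map fst (belast x1 its) ++ [:: (last x1 its).1].
      by rewrite -Eit lastI map_rcons cats1.
    have Hsb : n.-1 = size (map fst (belast x1 its)).
      by rewrite size_map size_belast -Hsz -Eit size_map.
    have H0 : val sl <= val (rot n.-1 sl).
      by have := Hsn 0; rewrite /lf_eval /lf_a /lf_b !mulr0 !add0r => H; exact: H.
    move: H0; rewrite Hsb El rot_size_cat => H.
    have := split_ineq H => H'.
    have E := cross_split_r (map fst (belast x1 its)) [:: (last x1 its).1].
    rewrite /vc cmp1 in E H'; rewrite /vc E; apply: mulr_ge0 => //.
    apply: ltW; case: HL => Hv _; have := Hv (last x1 its) (mem_last _ _); by case.
  have RV := angle_rep V0.
  case: (rep_window (x1.2) RV) => psi Rpsi /andP[H1 H2].
  have Hne : psi != x1.2.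
    apply/eqP => E; rewrite E in Rpsi.
    have Ea := rep_angle_eq Rpsi Vx1.2.
    apply: (Hth (Ordinal Hn0) erefl).
    have -> : F (s (Ordinal Hn0)) = x1.1.
      have : nth x1.1 sl 0 = x1.1 by rewrite -Eit.
      rewrite /sl (nth_map (Ordinal Hn0)) ?size_enum_ord //.
      have -> : nth (Ordinal Hn0) (enum 'I_n) 0 = Ordinal Hn0.
        by apply: val_inj; rewrite /= nth_enum_ord.
      by [].
    rewrite /theta (negbTE HV) (negbTE (Nsl x1.1 _)); last by rewrite -Eit mem_head.
    by rewrite Esl -/(vc sl) Ea.
  have Hb := split_lemma HL Rpsi H1 H2 Hne Hc1 Hc2.
  have Rpsi' : rep (vc (map fst (x1 :: its))) psi by rewrite Eit.
  by rewrite -Eit; apply: (final_rot HL Rpsi').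
set rl := [seq F (r i) | i <- enum 'I_n].
have Hp : perm_eq sl rl.
  rewrite /sl /rl (map_comp F s) (map_comp F r); apply: perm_map.
  by rewrite (permPl (perm_enum_map s)) perm_sym; exact: perm_enum_map.
have Hp' : perm_eq (map fst it) rl by rewrite Eit.
have [c [Hc Hv]] := main_ind HL Hp'.
move=> x; rewrite /lf_eval /lf_a /lf_b.
have -> : (fperm F s).1 = (fperm F r).1 by exact: (perm_a Hp).
rewrite lerD2l.
apply: (le_trans (Hrot c)); rewrite -Eit; exact: Hv.
Qed.
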